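(* Let $\mathit{VI}$ be a finite set of variables with $\#\mathit{VI}=n$. Let $\mathit{PSD}^{+}=\{sh\in\mathit{PSD}\mid\forall x\in\mathit{VI}:\{x\}\in sh\}$, $\mathit{Def}^{-}=\mathit{PSD}\sim\mathit{PSD}^{+}$, and $\mathit{PSD}^{\ddagger}=\{sh\in\mathit{PSD}\mid\mathit{VI}\in sh,\ \forall x\in\mathit{VI}:\{x\}\in sh\}$. Then $\mathit{Def}^{-}$, $\mathit{PS}$, and $\mathit{PSD}^{\ddagger}$ form a minimal decomposition for $\mathit{PSD}$.
   Context: $\mathit{SG}=\wp(\mathit{VI})\setminus\{\emptyset\}$, $\mathit{SH}=\wp(\mathit{SG})$ ordered by inclusion. $\mathrm{pairs}(S)=\{T\subseteq S\mid\#T=2\}$, $\mathrm{pairs}(sh)=\bigcup_{S'\in sh}\mathrm{pairs}(S')$, $\mathit{PS}=\{\rho_{\mathit{PS}}(sh)\mid sh\in\mathit{SH}\}$ with $\rho_{\mathit{PS}}(sh)=\{S\in\mathit{SG}\mid\mathrm{pairs}(S)\subseteq\mathrm{pairs}(sh)\}$. $\mathit{PSD}=\{\rho_{\mathit{PSD}}(sh)\mid sh\in\mathit{SH}\}$ with $\rho_{\mathit{PSD}}(sh)=\{\,S\in\mathit{SG}\mid \forall T\subseteq S:\ \#T<2\implies S=\bigcup\{U\in sh\mid T\subseteq U\subseteq S\}\,\}$; it is a complete lattice under inclusion. Upper closure operators on a complete lattice $C$ are identified with their images (subsets closed under arbitrary meets); $\mathrm{uco}(C)$ is ordered by $\rho_1\sqsubseteq\rho_2$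 iff $\rho_2(C)\subseteq\rho_1(C)$, with reduced product $\sqcap$ the glb (image = meet-closure of the union of images). For $D\subseteq C$ the image of some $\rho\in\mathrm{uco}(C)$, $C\sim D=\mathrm{lub}\{\rho_2\in\mathrm{uco}(C)\mid\rho\sqcap\rho_2=\mathit{id}_C\}$. A family $D_1,\dots,D_m$ of such images is a decomposition of $C$ if $C=D_1\sqcap\dots\sqcap D_m$; it is minimal if for each $i$ and each $E_i\in\mathrm{uco}(C)$ with $D_i\sqsubset E_i$, one has $C\sqsubset D_1\sqcap\dots\sqcap D_{i-1}\sqcap E_i\sqcap D_{i+1}\sqcap\dots\sqcap D_m$. *)

(* Defs.v *)
From mathcomp Require Import all_boot.
Set Implicit Arguments. Unset Strict Implicit. Unset Printing Implicit Defensive.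

Section Sharing.
Variable VI : finType.

(* SH = subsets of SG = nonempty subsets of VI *)
Definition SH : {set {set {set VI}}} := [set sh : {set {set VI}} | set0 \notin sh].

Definition pairsS (S : {set VI}) : {set {set VI}} :=
  [set T0 : {set VI} | (T0 \subset S) && (#|T0| == 2)].
Definition pairsSH (sh : {set {set VI}}) : {set {set VI}} :=
  \bigcup_(S in sh) pairsS S.

Definition rhoPS (sh : {set {set VI}}) : {set {set VI}} :=
  [set S : {set VI} | (S != set0) && (pairsS S \subset pairsSH sh)].

Definition rhoPSD (sh : {set {set VI}}) : {set {set VI}} :=
  [set S : {set VI} | (S != set0) &&
     [forall T0 : {set VI}, ((T0 \subset S) && (#|T0| < 2)) ==>
        (S == \bigcup_(U in sh | (T0 \subset U) && (U \subset S)) U)]].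

Definition PS  : {set {set {set VI}}} := [set rhoPS sh | sh in SH].
Definition PSD : {set {set {set VI}}} := [set rhoPSD sh | sh in SH].

Definition PSDplus : {set {set {set VI}}} :=
  [set sh in PSD | [forall x : VI, [set x] \in sh]].
Definition PSDddag : {set {set {set VI}}} :=
  [set sh in PSD | (setT \in sh) && [forall x : VI, [set x] \in sh]].
End Sharing.

Section UCO.
Variable W : finType.
Implicit Types (C D E A X : {set {set W}}) (m : {set W}).

Definition is_meet C X m : bool :=
  [&& m \in C, [forall x in X, m \subset x] &
      [forall y in C, [forall x in X, y \subset x] ==> (y \subset m)]].

(* D is the image of an upper closure operator on C:
   D is a subset of C closed under arbitrary meets of C *)
Definition uco_image C D : bool :=
  (D \subset C) &&
  [forall X : {set {set W}}, forall m : {set W},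
     ((X \subset D) && is_meet C X m) ==> (m \in D)].

(* meet-closure in C of A: image of the reduced product (glb in uco(C))
   of the ucos whose images are united in A *)
Definition meet_closure C A : {set {set W}} :=
  [set m | [exists X : {set {set W}}, (X \subset A) && is_meet C X m]].

(* C ~ D : lub in uco(C) (rho1 <= rho2 iff img rho2 \subset img rho1)
   of all rho2 with D (x) rho2 = id_C; the lub of ucos has as image the
   intersection of the images. *)
Definition complement C D : {set {set W}} :=
  \bigcap_(D2 : {set {set W}} |
             uco_image C D2 && (meet_closure C (D :|: D2) == C)) D2.

Definition decomposition3 C D1 D2 D3 : Prop :=
  [/\ uco_image C D1, uco_image C D2, uco_image C D3 &
      meet_closure C (D1 :|: D2 :|: D3) = C].

(* minimality: replacing any D_i by a strictly more abstract E_i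
   (img E_i proper subset of img D_i) loses precision:
   C strictly below the product, i.e. its image is a proper subset of C *)
Definition minimal_decomposition3 C D1 D2 D3 : Prop :=
  decomposition3 C D1 D2 D3 /\
  [/\ forall E, uco_image C E -> E \proper D1 ->
        meet_closure C (E :|: D2 :|: D3) \proper C,
      forall E, uco_image C E -> E \proper D2 ->
        meet_closure C (D1 :|: E :|: D3) \proper C &
      forall E, uco_image C E -> E \proper D3 ->
        meet_closure C (D1 :|: D2 :|: E) \proper C].
End UCO.

(* Main.v *)
Require Import Defs.
From mathcomp Require Import all_boot.
Set Implicit Arguments. Unset Strict Implicit. Unset Printing Implicit Defensive.

Section Gen.
Variable W : finType.
Variable C : {set {set W}}.
Implicit Types (X A B D : {set {set W}}) (m c d : {set W}).

Lemma is_meetP X m : reflect [/\ m \in C, forall x, x \in X -> m \subset x &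
  forall y, y \in C -> (forall x, x \in X -> y \subset x) -> y \subset m]
  (is_meet C X m).
Proof.
apply: (iffP and3P) => [[mC /forall_inP H1 /forall_inP H2]|[mC H1 H2]].
- split => // y yC Hy; apply: (implyP (H2 y yC)); exact/forall_inP.
- split => //; first exact/forall_inP.
  apply/forall_inP => y yC; apply/implyP => /forall_inP; exact: H2.
Qed.

Lemma mcP A m : reflect (exists2 X : {set {set W}}, X \subset A & is_meet C X m)
  (m \in meet_closure C A).
Proof.
rewrite inE; apply: (iffP existsP) => [[X /andP[]] | [X H1 H2]].
  by exists X.
by exists X; rewrite H1.
Qed.

Lemma mc_sub A : meet_closure C A \subset C.
Proof. by apply/subsetP => m /mcP [X _ /is_meetP []]. Qed.

Lemma mc_up A m : m \in meet_closure C A -> is_meet C [set a in A | m \subset a] m.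
Proof.
case/mcP => X XA /is_meetP [mC H1 H2]; apply/is_meetP; split => //.
- by move=> x; rewrite inE => /andP[].
- move=> y yC Hy; apply: H2 => // x xX; apply: Hy; rewrite inE (subsetP XA) //=.
  exact: H1.
Qed.

Lemma mc_meet X m A : X \subset A -> is_meet C X m -> m \in meet_closure C A.
Proof. by move=> *; apply/mcP; exists X. Qed.

Lemma mc_uco A : uco_image C (meet_closure C A).
Proof.
apply/andP; split; first exact: mc_sub.
apply/forallP => X; apply/forallP => m; apply/implyP => /andP[XM /is_meetP[mC H1 H2]].
apply: (@mc_meet [set a in A | m \subset a]).
  by apply/subsetP => a; rewrite inE => /andP[].
apply/is_meetP; split => //; first by move=> x; rewrite inE => /andP[].
move=> y yC Hy; apply: H2 => // x xX.
have /is_meetP [_ _ Hx] := mc_up (subsetP XM x xX).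
apply: Hx => // a; rewrite inE => /andP[aA xa]; apply: Hy; rewrite inE aA /=.
exact: subset_trans (H1 x xX) xa.
Qed.

Lemma ucoP D : uco_image C D -> forall X m, X \subset D -> is_meet C X m -> m \in D.
Proof.
move=> /andP[_ /forallP H] X m XD Hm.
by have /forallP/(_ m)/implyP := H X; apply; rewrite XD Hm.
Qed.

Lemma uco_sub D : uco_image C D -> D \subset C.
Proof. by case/andP. Qed.

Lemma meet1 d : d \in C -> is_meet C [set d] d.
Proof.
move=> dC; apply/is_meetP; split => // [x|y _ H].
  by rewrite inE => /eqP ->.
by apply: H; exact: set11.
Qed.

Lemma mc_mono A B : A \subset B -> meet_closure C A \subset meet_closure C B.
Proof.
move=> AB; apply/subsetP => m /mcP [X XA H]; apply/mcP; exists X => //.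
exact: subset_trans XA AB.
Qed.

Lemma mc_in A d : d \in C -> d \in A -> d \in meet_closure C A.
Proof.
move=> dC dA; apply: (@mc_meet [set d]); [by rewrite sub1set | exact: meet1].
Qed.

Definition Irr := [set m in C | ~~ is_meet C [set a in C | m \proper a] m].

Lemma Irr_sub : Irr \subset C.
Proof. by apply/subsetP => m; rewrite inE => /andP[]. Qed.

Lemma irr_in m X : m \in Irr -> X \subset C -> is_meet C X m -> m \in X.
Proof.
rewrite inE => /andP[mC nH] XC /is_meetP[_ H1 H2]; apply/negPn/negP => mX.
case/negP: nH; apply/is_meetP; split => //.
- by move=> a; rewrite inE => /andP[_ /proper_sub].
- move=> y yC Hy; apply: H2 => // x xX; apply: Hy.
  rewrite inE (subsetP XC) //= properEneq H1 // andbT.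
  by apply: contraNneq mX => ->.
Qed.

Lemma irr_mc m A : m \in Irr -> A \subset C -> m \in meet_closure C A -> m \in A.
Proof.
move=> mI AC /mcP[X XA H]; apply: (subsetP XA); apply: irr_in mI _ H.
exact: subset_trans XA AC.
Qed.

Lemma irr_dense c : c \in C -> is_meet C [set a in Irr | c \subset a] c.
Proof.
suff: forall k c, #|~: c| < k -> c \in C -> is_meet C [set a in Irr | c \subset a] c.
  by move=> H; apply: (H #|~: c|.+1).
elim => // k IH {}c ck cC.
case cI: (c \in Irr).
- apply/is_meetP; split => //; first by move=> a; rewrite inE => /andP[].
  move=> y _ Hy; apply: Hy; by rewrite inE cI subxx.
- have: is_meet C [set a in C | c \proper a] c.
    by move: cI; rewrite inE cC /= => /negbFE.
  move/is_meetP => [_ _ H2]; apply/is_meetP; split => //.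
    by move=> a; rewrite inE => /andP[].
  move=> y yC Hy; apply: H2 => // a; rewrite inE => /andP[aC ca].
  have ak : #|~: a| < k.
    have := proper_card (A := ~: a) (B := ~: c); rewrite properC ca => /(_ isT).
    move=> h; exact: leq_trans h ck.
  have /is_meetP[_ _ Ha] := IH a ak aC.
  apply: Ha => // b; rewrite inE => /andP[bI ab]; apply: Hy.
  rewrite inE bI; exact: subset_trans (proper_sub ca) ab.
Qed.

Lemma mc_of_irr A c : c \in C ->
  (forall a, a \in Irr -> c \subset a -> a \in A) -> c \in meet_closure C A.
Proof.
move=> cC H; apply: (@mc_meet [set a in Irr | c \subset a]) (irr_dense cC).
by apply/subsetP=> a; rewrite inE => /andP[]; apply: H.
Qed.

Lemma complementE D : D \subset C -> complement C D = meet_closure C (Irr :\: D).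
Proof.
move=> DC; set G := meet_closure C (Irr :\: D).
have HG : uco_image C G && (meet_closure C (D :|: G) == C).
  rewrite mc_uco /=; rewrite eqEsubset mc_sub /=; apply/subsetP => c cC.
  apply: mc_of_irr => // a aI _; rewrite inE; case aD: (a \in D) => //=.
  apply: mc_in; first exact: (subsetP Irr_sub).
  by rewrite inE aD.
apply/eqP; rewrite eqEsubset; apply/andP; split.
- rewrite /complement; exact: (@bigcap_inf _ _ G _ id HG).
- rewrite /complement; apply/bigcapsP => D2 /andP[U2 /eqP E2].
  apply/subsetP => m /mcP [X XI Hm]; apply: (ucoP U2 _ Hm).
  apply/subsetP => x xX; have := subsetP XI x xX; rewrite inE => /andP[xD xI].
  have: x \in D :|: D2.
    apply: (irr_mc xI); first by rewrite subUset DC uco_sub.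
    rewrite E2; exact: (subsetP Irr_sub).
  by rewrite inE (negbTE xD).
Qed.

End Gen.
Section Spec.
Variable VI : finType.
Hypothesis Hpos : 0 < #|VI|.
Local Notation C := (PSD VI).
Implicit Types (sh c m p q y : {set {set VI}}) (S T U : {set VI}).

Definition good sh S := (S != set0) && [forall T : {set VI}, ((T \subset S) && (#|T| < 2)) ==>
  [forall z in S, [exists U in sh, [&& T \subset U, U \subset S & z \in U]]]].

Lemma rhoPSDE sh S : (S \in rhoPSD sh) = good sh S.
Proof.
rewrite inE /good; congr (_ && _); apply: eq_forallb => T; congr (_ ==> _).
apply/eqP/forall_inP => [E z zS | H].
- move: zS; rewrite {1}E => /bigcupP[U /andP[Ush /andP[UT US]] zU].
  by apply/exists_inP; exists U => //; rewrite UT US zU.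
- apply/eqP; rewrite eqEsubset; apply/andP; split.
    apply/subsetP => z zS; have /exists_inP[U Ush /and3P[TU US zU]] := H z zS.
    by apply/bigcupP; exists U => //; rewrite Ush TU US.
  by apply/bigcupsP => U /andP[_ /andP[_ ]].
Qed.

Lemma goodP sh S : reflect (S != set0 /\ forall T z, T \subset S -> #|T| < 2 -> z \in S ->
   exists U, [/\ U \in sh, T \subset U, U \subset S & z \in U]) (good sh S).
Proof.
apply: (iffP andP) => [[S0 /forallP H]|[S0 H]]; split => //.
- move=> T z TS T2 zS; have /implyP/(_ _)/forall_inP := H T.
  rewrite TS T2 => /(_ isT z zS) /exists_inP[U Ush /and3P[? ? ?]]; by exists U.
- apply/forallP => T; apply/implyP => /andP[TS T2]; apply/forall_inP => z zS.
  have [U [? ? ? ?]] := H T z TS T2 zS; apply/exists_inP; exists U => //.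
  by apply/and3P.
Qed.

Lemma rhoPSDP sh S : reflect (S != set0 /\ forall T z, T \subset S -> #|T| < 2 -> z \in S ->
   exists U, [/\ U \in sh, T \subset U, U \subset S & z \in U]) (S \in rhoPSD sh).
Proof. rewrite rhoPSDE; exact: goodP. Qed.

Lemma rhoPSD_ext sh : set0 \notin sh -> sh \subset rhoPSD sh.
Proof.
move=> sh0; apply/subsetP => S Ssh; apply/rhoPSDP; split.
  by apply: contraNneq sh0 => <-.
by move=> T z TS _ zS; exists S; rewrite subxx.
Qed.

Lemma rhoPSD_mono sh1 sh2 : sh1 \subset sh2 -> rhoPSD sh1 \subset rhoPSD sh2.
Proof.
move=> s12; apply/subsetP => S /rhoPSDP[S0 H]; apply/rhoPSDP; split => //.
move=> T z TS T2 zS; have [U [? ? ? ?]] := H T z TS T2 zS; exists U; split => //.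
exact: (subsetP s12).
Qed.

Lemma rhoPSD_idem sh : rhoPSD (rhoPSD sh) \subset rhoPSD sh.
Proof.
apply/subsetP => S /rhoPSDP[S0 H]; apply/rhoPSDP; split => //.
move=> T z TS T2 zS; have [U [/rhoPSDP[_ HU] TU US zU]] := H T z TS T2 zS.
have [V [? ? VU ?]] := HU T z TU T2 zU; exists V; split => //.
exact: subset_trans VU US.
Qed.

Lemma set0_rhoPSD sh : set0 \notin rhoPSD sh.
Proof. by rewrite inE eqxx. Qed.

Lemma PSD_P c : reflect (set0 \notin c /\ rhoPSD c \subset c) (c \in C).
Proof.
apply: (iffP idP) => [/imsetP[sh _ ->]|[c0 H]].
  by split; [exact: set0_rhoPSD | exact: rhoPSD_idem].
apply/imsetP; exists c; first by rewrite inE.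
by apply/eqP; rewrite eqEsubset H rhoPSD_ext.
Qed.

Lemma rhoPSD_in sh : rhoPSD sh \in C.
Proof. by apply/PSD_P; split; [exact: set0_rhoPSD | exact: rhoPSD_idem]. Qed.

Lemma PSD_fix c : c \in C -> rhoPSD c = c.
Proof. by case/PSD_P => c0 H; apply/eqP; rewrite eqEsubset H rhoPSD_ext. Qed.

Lemma PSD_ne c S : c \in C -> S \in c -> S != set0.
Proof. by case/PSD_P => c0 _ Sc; apply: contraNneq c0 => <-. Qed.

Lemma pairsSE T S : (T \in pairsS S) = (T \subset S) && (#|T| == 2).
Proof. by rewrite inE. Qed.

Lemma pairsSHP T sh : reflect (exists2 U, U \in sh & T \in pairsS U) (T \in pairsSH sh).
Proof. exact: bigcupP. Qed.

Lemma rhoPSE sh S : (S \in rhoPS sh) = (S != set0) && (pairsS S \subset pairsSH sh).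
Proof. by rewrite inE. Qed.

Lemma pairsSH_mono sh1 sh2 : sh1 \subset sh2 -> pairsSH sh1 \subset pairsSH sh2.
Proof.
move=> s12; apply/subsetP => T /pairsSHP[U Ush TU]; apply/pairsSHP; exists U => //.
exact: (subsetP s12).
Qed.

Lemma pairsS_sub T S : T \in pairsS S -> forall sh, S \in sh -> T \in pairsSH sh.
Proof. by move=> TS sh Ssh; apply/pairsSHP; exists S. Qed.

Lemma rhoPS_mono sh1 sh2 : sh1 \subset sh2 -> rhoPS sh1 \subset rhoPS sh2.
Proof.
move=> s12; apply/subsetP => S; rewrite !rhoPSE => /andP[-> H] /=.
exact: subset_trans H (pairsSH_mono s12).
Qed.

Lemma rhoPS_ext sh : set0 \notin sh -> sh \subset rhoPS sh.
Proof.
move=> sh0; apply/subsetP => S Ssh; rewrite rhoPSE; apply/andP; split.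
  by apply: contraNneq sh0 => <-.
by apply/subsetP => T TS; apply: pairsS_sub TS _ Ssh.
Qed.

Lemma rhoPS_idem sh : rhoPS (rhoPS sh) \subset rhoPS sh.
Proof.
apply/subsetP => S; rewrite !rhoPSE => /andP[-> H] /=.
apply: subset_trans H _; apply/subsetP => T /pairsSHP[U]; rewrite rhoPSE.
by case/andP => _ /subsetP H1 /H1.
Qed.

Lemma PS_P p : reflect (set0 \notin p /\ rhoPS p \subset p) (p \in PS VI).
Proof.
apply: (iffP idP) => [/imsetP[sh _ ->]|[c0 H]].
  by split; [rewrite rhoPSE eqxx | exact: rhoPS_idem].
apply/imsetP; exists p; first by rewrite inE.
by apply/eqP; rewrite eqEsubset H rhoPS_ext.
Qed.

Lemma rhoPS_in sh : rhoPS sh \in PS VI.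
Proof. by apply/PS_P; split; [rewrite rhoPSE eqxx | exact: rhoPS_idem]. Qed.

Lemma PS_fix p : p \in PS VI -> rhoPS p = p.
Proof. by case/PS_P => c0 H; apply/eqP; rewrite eqEsubset H rhoPS_ext. Qed.

Lemma cards1_lt (a : VI) : #|[set a]| < 2.
Proof. by rewrite cards1. Qed.

Lemma PS_PSD p : p \in PS VI -> p \in C.
Proof.
move=> pP; have [p0 Hp] := PS_P _ pP; apply/PSD_P; split => //.
apply/subsetP => S /rhoPSDP[S0 H]; apply: (subsetP Hp); rewrite rhoPSE S0 /=.
apply/subsetP => T; rewrite pairsSE => /andP[TS /cards2P[a [b [ab TE]]]].
have aS : [set a] \subset S by rewrite sub1set (subsetP TS) // TE !inE eqxx.
have bS : b \in S by rewrite (subsetP TS) // TE !inE eqxx orbT.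
have [U [Up aU US bU]] := H _ b aS (cards1_lt a) bS.
apply: (pairsS_sub _ Up); rewrite pairsSE TE cards2 ab eqxx andbT.
by rewrite subUset aU sub1set bU.
Qed.

Lemma PS_single p x : p \in PS VI -> [set x] \in p.
Proof.
move=> /PS_fix <-; rewrite rhoPSE; apply/andP; split.
  by apply/set0Pn; exists x; rewrite inE.
apply/subsetP => T; rewrite pairsSE => /andP[/subset_leq_card]; rewrite cards1.
by move=> h /eqP h2; rewrite h2 in h.
Qed.

Lemma PS_plus p : p \in PS VI -> p \in PSDplus VI.
Proof.
move=> pP; rewrite inE PS_PSD //=; apply/forallP => x; exact: PS_single.
Qed.

Lemma ddag_plus d : d \in PSDddag VI -> d \in PSDplus VI.
Proof. by rewrite !inE => /andP[-> /andP[]]. Qed.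

Lemma plus_PSD d : d \in PSDplus VI -> d \in C.
Proof. by rewrite inE => /andP[]. Qed.

Lemma plus_single d x : d \in PSDplus VI -> [set x] \in d.
Proof. by rewrite inE => /andP[_ /forallP]. Qed.

Lemma PS_top p y : p \in PS VI -> setT \in p -> y \in C -> y \subset p.
Proof.
move=> pP Tp yC; apply/subsetP => S Sy; rewrite -(PS_fix pP) rhoPSE (PSD_ne yC Sy) /=.
apply/subsetP => T; rewrite pairsSE => /andP[_ T2]; apply: (pairsS_sub _ Tp).
by rewrite pairsSE subsetT.
Qed.

Lemma setT_ne : [set: VI] != set0.
Proof. by have [x _] := card_gt0P Hpos; apply/set0Pn; exists x; rewrite inE. Qed.

Lemma allpairs m : (forall x, [set x] \in m) -> pairsS setT \subset pairsSH m ->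
  setT \in rhoPSD m.
Proof.
move=> Hs Hp; apply/rhoPSDP; split; first exact: setT_ne.
move=> T z _ T2 _.
case E2: (#|z |: T| == 2).
  have : z |: T \in pairsSH m by apply: (subsetP Hp); rewrite pairsSE subsetT.
  case/pairsSHP => U Um; rewrite pairsSE => /andP[zTU _].
  exists U; split => //; last by rewrite (subsetP zTU) // setU11.
    by apply: subset_trans zTU; apply: subsetUr.
have le1 : #|z |: T| <= 1.
  move: E2; rewrite cardsU1; case: (z \notin T) => /=; move: T2; case: #|T| => [|[|k]] //.
exists [set z]; split => //; last by rewrite inE.
  apply/subsetP => t tT; rewrite inE; apply/eqP.
  have := card_le1_eqP le1 t z; rewrite !inE tT eqxx orbT => /(_ isT isT) h.
  first [by rewrite h | by rewrite -h].
Qed.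

Lemma addVI c : c \in C -> setT |: c \in C.
Proof.
move=> cC; apply/PSD_P; split.
  rewrite in_setU1 negb_or eq_sym setT_ne /=; by case/PSD_P: cC.
apply/subsetP => S /rhoPSDP[S0 H]; rewrite in_setU1; case: eqVneq => //= SnT.
rewrite -(PSD_fix cC); apply/rhoPSDP; split => // T z TS T2 zS.
have [U [Uc TU US zU]] := H T z TS T2 zS; exists U; split => //.
move: Uc; rewrite in_setU1; case: eqVneq => //= UT _.
by case/eqP: SnT; apply/eqP; rewrite eqEsubset subsetT -UT US.
Qed.

Lemma key m : m \in Irr C -> (forall x, [set x] \in m) -> setT \notin m -> m \in PS VI.
Proof.
move=> mI Hs mT.
have mC : m \in C := subsetP (Irr_sub C) m mI.
have m0 : set0 \notin m by case/PSD_P: mC.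
case pm: (rhoPS m \subset m); first by apply/PS_P.
have pC : rhoPS m \in C := PS_PSD (rhoPS_in m).
have mp : m \proper rhoPS m by rewrite properE rhoPS_ext // pm.
have pT : setT \notin rhoPS m.
  apply: contra mT; rewrite rhoPSE => /andP[_ Hp]; rewrite -(PSD_fix mC); exact: allpairs.
have m'C := addVI mC.
have mm' : m \proper setT |: m.
  by rewrite properE subsetUr subUset sub1set (negbTE mT).
move: mI; rewrite inE mC /= => /negP H; exfalso; apply: H; apply/is_meetP; split => //.
  by move=> a; rewrite inE => /andP[_ /proper_sub].
move=> y yC Hy; apply/subsetP => S Sy.
have Sp : S \in rhoPS m by apply: (subsetP (Hy _ _)) Sy; rewrite inE pC mp.
have : S \in setT |: m by apply: (subsetP (Hy _ _)) Sy; rewrite inE m'C mm'.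
rewrite in_setU1; case: eqVneq => //= ST; by move: pT; rewrite -ST Sp.
Qed.

Lemma G_top g y : g \in meet_closure C (Irr C :\: PSDplus VI) ->
  (forall x, [set x] \in g) -> y \in C -> y \subset g.
Proof.
case/mcP => X XI /is_meetP[_ H1 H2] Hs yC; apply: H2 => // x xX; exfalso.
have := subsetP XI x xX; rewrite in_setD => /andP[/negP nP xI]; apply: nP.
rewrite inE (subsetP (Irr_sub C) x xI) /=; apply/forallP => z; exact: (subsetP (H1 x xX)).
Qed.

Definition qq (a b : VI) : {set {set VI}} :=
  [set S | (S != set0) && ~~ ([set a; b] \subset S)].

Lemma q_PS a b : a != b -> qq a b \in PS VI.
Proof.
move=> ab; apply/PS_P; split; first by rewrite inE eqxx.
apply/subsetP => S; rewrite rhoPSE => /andP[S0 HS]; rewrite inE S0 /=.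
apply/negP => abS.
have : [set a; b] \in pairsSH (qq a b).
  by apply: (subsetP HS); rewrite pairsSE abS cards2 ab.
case/pairsSHP => U; rewrite inE pairsSE => /andP[_ /negP nU] /andP[abU _]; exact: nU abU.
Qed.

Lemma p_meet p : p \in PS VI -> is_meet C [set X | [exists a, exists b,
   [&& a != b, [set a; b] \notin pairsSH p & X == qq a b]]] p.
Proof.
move=> pP; apply/is_meetP; split; first exact: PS_PSD.
- move=> X; rewrite inE => /existsP[a /existsP[b /and3P[ab nab /eqP ->]]].
  apply/subsetP => S Sp; rewrite inE (PSD_ne (PS_PSD pP) Sp) /=; apply: contra nab => abS.
  by apply: (pairsS_sub _ Sp); rewrite pairsSE abS cards2 ab.
- move=> y yC Hy; apply/subsetP => S Sy; rewrite -(PS_fix pP) rhoPSE (PSD_ne yC Sy) /=.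
  apply/subsetP => T; rewrite pairsSE => /andP[TS /cards2P[a [b [ab TE]]]].
  rewrite TE; apply/negPn/negP => nab.
  have : S \in qq a b.
    apply: (subsetP (Hy _ _)) Sy; rewrite inE; apply/existsP; exists a; apply/existsP; exists b.
    by rewrite ab nab eqxx.
  by rewrite inE -TE TS andbF.
Qed.

Lemma pair_q a b T : a != b -> T \in pairsS setT -> T != [set a; b] -> T \in qq a b.
Proof.
move=> ab; rewrite pairsSE => /andP[_ /eqP T2] nT; rewrite inE; apply/andP; split.
  by apply/set0Pn/card_gt0P; rewrite T2.
by apply: contra nT => abT; rewrite eq_sym eqEcard abT T2 cards2 ab.
Qed.

Lemma main : minimal_decomposition3 C
    (complement C (PSDplus VI)) (PS VI) (PSDddag VI).
Proof.
have PlusC : PSDplus VI \subset C by apply/subsetP => x; exact: plus_PSD.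
rewrite (complementE PlusC).
set G := meet_closure C (Irr C :\: PSDplus VI).
have GC : G \subset C := mc_sub _ _.
have Guco : uco_image C G := mc_uco _ _.
have PSC : PS VI \subset C by apply/subsetP => p; exact: PS_PSD.
have ddC : PSDddag VI \subset C by apply/subsetP => d /ddag_plus/plus_PSD.
have PSuco : uco_image C (PS VI).
  apply/andP; split => //; apply/forallP => X; apply/forallP => m.
  apply/implyP => /andP[XP /is_meetP[mC H1 H2]].
  apply/PS_P; split; first by case/PSD_P: mC.
  apply: H2; first exact: PS_PSD (rhoPS_in m).
  move=> x xX; have xP := subsetP XP x xX; rewrite -(PS_fix xP).
  exact: rhoPS_mono (H1 x xX).
have dduco : uco_image C (PSDddag VI).
  apply/andP; split => //; apply/forallP => X; apply/forallP => m.
  apply/implyP => /andP[XD /is_meetP[mC H1 H2]].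
  set sh := setT |: [set [set x] | x : VI].
  have shm : rhoPSD sh \subset m.
    apply: H2; first exact: rhoPSD_in.
    move=> x xX; have xD := subsetP XD x xX.
    rewrite -(PSD_fix (plus_PSD (ddag_plus xD))).
    apply: rhoPSD_mono; apply/subsetP => S; rewrite in_setU1 => /orP[/eqP -> | /imsetP[z _ ->]].
    - by move: xD; rewrite inE => /and3P[_ ? _].
    - exact: plus_single (ddag_plus xD).
  have sh0 : set0 \notin sh.
    rewrite in_setU1 negb_or eq_sym setT_ne /=.
    by apply/negP => /imsetP[z _ /setP /(_ z)]; rewrite !inE eqxx.
  have shsub := subset_trans (rhoPSD_ext sh0) shm.
  rewrite inE mC /=; apply/andP; split; first by rewrite (subsetP shsub) ?setU11.
  apply/forallP => x; apply: (subsetP shsub).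
  by rewrite in_setU1 imset_f ?orbT.
split.
  split => //; apply/eqP; rewrite eqEsubset mc_sub /=.
  apply/subsetP => c cC; apply: (mc_of_irr cC) => a aI _.
  have aC := subsetP (Irr_sub _) a aI.
  rewrite !in_setU; case aP: (a \in PSDplus VI).
  + case aT: (setT \in a).
    * have -> : a \in PSDddag VI.
        by move: aP; rewrite !inE aT => /andP[-> ->].
      by rewrite orbT.
    * by rewrite (key aI _ (negbT aT)) ?orbT // => x; exact: plus_single aP.
  + apply/orP; left; apply/orP; left; apply: mc_in aC _; by rewrite inE aP aI.
split.
- move=> E Euco EG.
  have : ~~ (Irr C :\: PSDplus VI \subset E).
    apply: contraL EG => IE; rewrite properE negb_and negbK; apply/orP; right.
    apply: subset_trans (mc_mono _ IE) _; apply/subsetP => x /mcP[X XE Hx].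
    exact: ucoP Euco _ _ XE Hx.
  case/subsetPn => m mI mE.
  have [mnP mIrr] : m \notin PSDplus VI /\ m \in Irr C by move: mI; rewrite in_setD => /andP[].
  rewrite properE mc_sub /=; apply/subsetPn; exists m; first exact: (subsetP (Irr_sub _)).
  apply/negP => Hm.
  have AC : E :|: PS VI :|: PSDddag VI \subset C by rewrite !subUset (uco_sub Euco) PSC ddC.
  have := irr_mc mIrr AC Hm.
  rewrite !in_setU (negbTE mE) /=; case/orP => [/PS_plus | /ddag_plus]; by rewrite (negbTE mnP).
- move=> E Euco EP.
  have [p pP pE] : exists2 p, p \in PS VI & p \notin E.
    by move: EP; rewrite properE => /andP[_ /subsetPn[p pP pE]]; exists p.
  have [a [b [ab qE]]] : exists a b, a != b /\ qq a b \notin E.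
    case: (boolP [exists a, exists b, (a != b) && (qq a b \notin E)]).
      by case/existsP => a /existsP[b /andP[ab qE]]; exists a, b.
    move=> nq; exfalso; move/negP: pE; apply; apply: (ucoP Euco _ (p_meet pP)).
    apply/subsetP => X; rewrite inE => /existsP[a /existsP[b /and3P[ab _ /eqP ->]]].
    apply/negPn/negP => qE; case/negP: nq; apply/existsP; exists a; apply/existsP; exists b.
    by rewrite ab qE.
  have qP := q_PS ab.
  have qC := PS_PSD qP.
  have qT : setT \notin qq a b by rewrite inE negb_and negbK subsetT orbT.
  rewrite properE mc_sub /=; apply/subsetPn; exists (qq a b) => //.
  apply/negP => /mc_up /is_meetP[_ H1 H2].
  have : setT |: qq a b \subset qq a b.
    apply: H2; first exact: addVI.
    move=> y; rewrite inE => /andP[yA qy]; rewrite subUset qy andbT sub1set.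
    move: yA; rewrite !in_setU => /orP[/orP[yG | yE] | yD].
    * apply: (subsetP (G_top yG _ (addVI qC))); first by move=> x; apply: (subsetP qy); exact: PS_single.
      exact: setU11.
    * have yP : y \in PS VI := subsetP (proper_sub EP) y yE.
      have : ~~ (y \subset qq a b).
        apply: contra qE => yq; suff -> : qq a b = y by [].
        by apply/eqP; rewrite eqEsubset qy yq.
      case/subsetPn => S Sy Sq.
      have abS : [set a; b] \subset S.
        by move: Sq; rewrite inE (PSD_ne (PS_PSD yP) Sy) /= negbK.
      rewrite -(PS_fix yP) rhoPSE setT_ne /=; apply/subsetP => T TT.
      case: (eqVneq T [set a; b]) => [-> | nT].
        by apply: (pairsS_sub _ Sy); rewrite pairsSE abS cards2 ab.
      have Ty := subsetP qy T (pair_q ab TT nT).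
      apply: (pairsS_sub _ Ty); rewrite pairsSE subxx /=.
      by move: TT; rewrite pairsSE => /andP[].
    * by move: yD; rewrite inE => /and3P[_ ? _].
  by rewrite subUset sub1set (negbTE qT).
- move=> E Euco ED.
  have [d dD dE] : exists2 d, d \in PSDddag VI & d \notin E.
    by move: ED; rewrite properE => /andP[_ /subsetPn[d dD dE]]; exists d.
  rewrite properE mc_sub /=; apply/subsetPn; exists d; first exact: (subsetP ddC).
  apply/negP => /mc_up /is_meetP[dC H1 H2]; move/negP: dE; apply.
  apply: (@ucoP _ _ _ Euco [set a in E | d \subset a]).
    by apply/subsetP => a; rewrite inE => /andP[].
  apply/is_meetP; split => //; first by move=> a; rewrite inE => /andP[].
  move=> z zC Hz; apply: H2 => // a; rewrite inE => /andP[aA da].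
  move: aA; rewrite !in_setU => /orP[/orP[aG | aP] | aE].
  * apply: G_top aG _ zC => x; apply: (subsetP da); exact: plus_single (ddag_plus dD).
  * apply: PS_top aP _ zC; apply: (subsetP da); by move: dD; rewrite inE => /and3P[].
  * by apply: Hz; rewrite inE aE da.
Qed.

End Spec.

Theorem corollary5p3 (VI : finType) (n : nat) (Hn : #|VI| = n) (Hpos : 0 < n) :
  minimal_decomposition3 (PSD VI)
    (complement (PSD VI) (PSDplus VI)) (PS VI) (PSDddag VI).
Proof. by apply: main; rewrite Hn. Qed.
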